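(* Let $G\leq\mathrm{Sym}(n)$ be a Frobenius group with Frobenius complement $H$ and Frobenius kernel $K$, so $G=KH$. Then $G$ has the EKR property. Furthermore, $G$ has the strict EKR property if and only if $|H|=2$.
   Context: A transitive permutation group $G\leq\mathrm{Sym}(n)$ is a Frobenius group if no non-identity element fixes more than one point and some non-identity element fixes a point. A Frobenius complement is a non-trivial proper subgroup $H$ with $H\cap g^{-1}Hg=\{\mathrm{id}\}$ for all $g\in G\setminus H$; the Frobenius kernel is $K=\left(G\setminus\bigcup_{g\in G}g^{-1}Hg\right)\cup\{\mathrm{id}\}$. Two permutations $\pi,\tau\in G$ intersect if $\pi\tau^{-1}$ has a fixed point. A subset is intersecting if every pair of its elements intersect. $G$ has the EKR property if every intersecting subset has size at most the size of the largest point-stabilizer; $G$ has the strict EKR property if moreover the only intersecting subsets of maximum size are the cosets of the point-stabilizers. *)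

(* Defs.v *)
From mathcomp Require Import all_boot all_fingroup.
Set Implicit Arguments. Unset Strict Implicit. Unset Printing Implicit Defensive.
Local Open Scope group_scope.

(* Permutations of the n points 'I_n; Sym(n) = [set: {perm 'I_n}].
   Note: in MathComp, (s * t) x = t (s x) and  H :^ g = g^-1 H g. *)

Definition frobenius_perm_group n (G : {group {perm 'I_n}}) : Prop :=
  [/\ [transitive G, on [set: 'I_n] | 'P],
      (forall g, g \in G -> g != 1%g -> #|[set x | g x == x]| <= 1)%N
    & exists2 g, g \in G & (g != 1%g) && [exists x, g x == x]].

Definition frobenius_complement n (G H : {group {perm 'I_n}}) : Prop :=
  [/\ H \proper G, H :!=: 1%g
    & forall g, g \in G :\: H -> H :&: (H :^ g) = 1%g].

Definition frobenius_kernel n (G H : {group {perm 'I_n}}) : {set {perm 'I_n}} :=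
  (G :\: \bigcup_(g in G) (H :^ g)) :|: [set 1%g].

(* pi and tau intersect iff pi tau^-1 has a fixed point. *)
Definition perm_intersect n (pi tau : {perm 'I_n}) : bool :=
  [exists x, (pi * tau^-1) x == x].

Definition intersecting n (S : {set {perm 'I_n}}) : Prop :=
  forall pi tau, pi \in S -> tau \in S -> perm_intersect pi tau.

Definition point_stab n (G : {group {perm 'I_n}}) (x : 'I_n) : {set {perm 'I_n}} :=
  'C_G[x | 'P].

Definition max_stab_size n (G : {group {perm 'I_n}}) : nat :=
  \max_(x : 'I_n) #|point_stab G x|.

Definition EKR n (G : {group {perm 'I_n}}) : Prop :=
  forall S : {set {perm 'I_n}}, S \subset G -> intersecting S ->
    (#|S| <= max_stab_size G)%N.

(* Cosets of point stabilizers; right cosets G_x g coincide with left cosets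
   g' G_y (both are the sets {s in G | s y = z}). *)
Definition strict_EKR n (G : {group {perm 'I_n}}) : Prop :=
  EKR G /\
  forall S : {set {perm 'I_n}}, S \subset G -> intersecting S ->
    #|S| = max_stab_size G ->
    exists x : 'I_n, exists2 g, g \in G & S = point_stab G x :* g.

(* Main.v *)
Require Import Defs.
From mathcomp Require Import all_boot all_fingroup all_solvable.
From mathcomp Require Import vcharacter zify.
Set Implicit Arguments. Unset Strict Implicit. Unset Printing Implicit Defensive.
Local Open Scope group_scope.


Lemma fixcomm (gT : finGroupType) (x y : gT) : x ^ y = x -> commute x y.
Proof. by move=> e; rewrite /commute -{2}e /conjg mulKVg. Qed.

Lemma frob_invert (gT : finGroupType) (G K H : {group gT}) (t : gT) : [Frobenius G = K ><| H] -> t \in H -> t != 1 -> t * t = 1 ->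
  forall y, y \in K -> y ^ t = y^-1.
Proof.
move=> frobG Ht nt1 tt.
have regK := Frobenius_reg_ker frobG.
have Ct : 'C_K[t] = 1 by apply: regK; rewrite !inE nt1.
have [defG _ _ _ _] := Frobenius_context frobG.
have [nsKG sHG _ nKH _] := sdprod_context defG.
have nKt : t \in 'N(K) by apply: (subsetP nKH).
pose f := fun k : gT => k^-1 * k ^ t.
have fK : {in K, forall k, f k \in K}.
  by move=> k Kk; rewrite /f groupM ?groupV // memJ_norm.
have injf : {in K &, injective f}.
  move=> a b Ka Kb; rewrite /f => eqf.
  have : b * a^-1 \in (1 : {set gT}).
    rewrite -Ct inE groupM ?groupV //=; apply/cent1P/fixcomm.
    have e : a ^ t = a * b^-1 * b ^ t by rewrite -mulgA -eqf mulKVg.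
    by rewrite conjMg conjVg e invMg mulKVg invMg invgK.
  by move=> /set1gP e1; rewrite -(mulgKV a b) e1 mul1g.
have fKK : f @: K = K.
  apply/eqP; rewrite eqEcard card_in_imset // leqnn andbT.
  by apply/subsetP=> _ /imsetP[k Kk ->]; apply: fK.
move=> y; rewrite -fKK => /imsetP[k Kk ->].
have tV : t^-1 = t by rewrite -[t^-1]mul1g -tt mulgK.
rewrite /f conjMg -conjgM tt conjg1 invMg invgK; congr (_ * _); exact: conjVg.
Qed.

Lemma frob_uniq_inv (gT : finGroupType) (G K H : {group gT}) (t s : gT) : [Frobenius G = K ><| H] ->
  t \in H -> t != 1 -> t * t = 1 -> s \in H -> s != 1 -> s * s = 1 -> t = s.
Proof.
move=> frobG Ht nt tt Hs ns ss.
have [defG ntK _ _ _] := Frobenius_context frobG.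
apply: contraNeq ntK => nts.
have nts1 : t * s != 1.
  apply: contra nts => /eqP ts1; apply/eqP.
  by rewrite -[s]mul1g -ts1 -mulgA ss mulg1.
have C1 : 'C_K[t * s] = 1 by apply: (Frobenius_reg_ker frobG); rewrite !inE nts1 groupM.
rewrite -C1 eqEsubset subsetIl andbT; apply/subsetP=> y Ky; rewrite inE Ky /=; apply/cent1P/fixcomm.
by rewrite conjgM (frob_invert frobG Ht nt tt Ky) conjVg (frob_invert frobG Hs ns ss Ky) invgK.
Qed.


Lemma frob_part_mem (gT : finGroupType) (G K H : {group gT}) (g : gT) : [Frobenius G = K ><| H] -> g \in G -> g \notin K ->
  exists2 k, k \in K & g ^ k^-1 \in H^#.
Proof.
move=> frobG Gg nKg.
have /and3P[/eqP covG _ _] := Frobenius_partition frobG.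
move: Gg; rewrite -covG => /bigcupP[B /setU1P[-> | /imsetP[k Kk ->]] gB].
  by rewrite gB in nKg.
by exists k => //; rewrite -mem_conjg.
Qed.

Lemma frob2_inv (gT : finGroupType) (G K H : {group gT}) (g : gT) : [Frobenius G = K ><| H] -> #|H| = 2 ->
  g \in G -> g \notin K -> g * g = 1.
Proof.
move=> frobG H2 Gg nKg.
have [k Kk] := frob_part_mem frobG Gg nKg.
rewrite inE => /andP[_ Hh].
have hh : (g ^ k^-1) * (g ^ k^-1) = 1.
  by have := expg_cardG Hh; rewrite H2 expgS expg1.
by rewrite -conjMg in hh; move: hh => /(congr1 (conjg^~ k)); rewrite conjgKV conj1g.
Qed.

Lemma frob_compl2 (gT : finGroupType) (G K1 H1 K2 H2 : {group gT}) : [Frobenius G = K1 ><| H1] -> [Frobenius G = K2 ><| H2] ->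
  #|H2| = 2 -> #|H1| = 2.
Proof.
move=> frob1 frob2 oH2.
have [defG1 ntK1 ntH1 ltK1 ltH1] := Frobenius_context frob1.
have [defG2 ntK2 ntH2 ltK2 ltH2] := Frobenius_context frob2.
have [nsK1G sH1G _ _ _] := sdprod_context defG1.
have [nsK2G sH2G _ _ _] := sdprod_context defG2.
have [sK2G nK2G] := andP nsK2G.
have [sK1G nK1G] := andP nsK1G.
have [sH1K2 | /subsetPn[t H1t nK2t]] := boolP (H1 \subset K2).
  have cov : forall g, g \in G -> (g \in K1) || (g \in K2).
    move=> g Gg; have [K1g|nK1g] := boolP (g \in K1); first by [].
    have [k Kk] := frob_part_mem frob1 Gg nK1g.
    rewrite inE => /andP[_ /(subsetP sH1K2) Hh].
    have Gk : k \in G by apply: (subsetP sK1G).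
    by rewrite -(memJ_norm _ (subsetP nK2G _ (groupVr Gk))) Hh orbT.
  have [_ [a Ga nK1a]] := properP ltK1.
  have [_ [b Gb nK2b]] := properP ltK2.
  have K2a : a \in K2 by have := cov a Ga; rewrite (negbTE nK1a).
  have K1b : b \in K1 by have := cov b Gb; rewrite (negbTE nK2b) orbF.
  have := cov (a * b) (groupM Ga Gb); case/orP => [K1ab | K2ab].
    by have := groupM K1ab (groupVr K1b); rewrite mulgK (negbTE nK1a).
  by have := groupM (groupVr K2a) K2ab; rewrite mulKg (negbTE nK2b).
have Gt : t \in G by apply: (subsetP sH1G).
have tt : t * t = 1 := frob2_inv frob2 oH2 Gt nK2t.
have nt1 : t != 1 by apply: contraNneq nK2t => ->; rewrite group1.
have ti : H1 :&: K2 = 1.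
  apply/trivgP/subsetP=> m /setIP[H1m K2m]; apply/set1gP.
  have nK2tm : t * m \notin K2.
    by apply: contra nK2t => K2tm; rewrite -(mulgK m t) groupM ?groupV.
  have H1tm : t * m \in H1 by rewrite groupM.
  have Gtm : t * m \in G by apply: (subsetP sH1G).
  have ntm : t * m != 1 by apply: contraNneq nK2tm => ->; rewrite group1.
  have := frob_uniq_inv frob1 H1tm ntm (frob2_inv frob2 oH2 Gtm nK2tm) H1t nt1 tt.
  by move=> e; rewrite -(mulKg t m) e mulVg.
have le : #|H1| * #|K2| <= #|K2| * 2.
  rewrite -TI_cardMg // -oH2 (sdprod_card defG2); apply: subset_leq_card.
  by rewrite mul_subG.
apply/eqP; rewrite eqn_leq; apply/andP; split.
  by rewrite mulnC leq_pmul2l ?cardG_gt0 in le.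
by rewrite cardG_gt1.
Qed.



Lemma fixE (n : nat) (g : {perm 'I_n}) : 'Fix_([set: 'I_n] | 'P)[g] = [set x | g x == x].
Proof. by apply/setP=> x; rewrite !inE sub1set inE. Qed.

Lemma stabP (n : nat) (G : {group {perm 'I_n}}) (x : 'I_n) (g : {perm 'I_n}) : reflect (g \in G /\ g x = x) (g \in point_stab G x).
Proof.
rewrite /point_stab inE; apply: (iffP andP) => [[Gg /astab1P gx]|[Gg gx]].
  by split.
by split=> //; apply/astab1P.
Qed.

Lemma compl_frob (n : nat) (G H : {group {perm 'I_n}}) : frobenius_complement G H -> [Frobenius G with complement H].
Proof.
case=> ltHG ntH tiH; apply/andP; split; first exact: proper_neq.
have sHG := proper_sub ltHG.
apply/normedTI_memJ_P; split=> //.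
  by apply: contra ntH; rewrite setD_eq0 subG1.
move=> a g /setD1P[na1 Ha] Gg; apply/idP/idP=> [/setD1P[_ Hag]|Hg]; last first.
  by rewrite !inE conjg_eq1 na1 groupJ.
apply: contraTT na1 => nHg.
have : a ^ g \in H :&: H :^ g by rewrite inE Hag memJ_conjg.
rewrite tiH; last by rewrite inE nHg Gg.
by move=> /set1gP e; rewrite negbK -(conjg_eq1 a g) e.
Qed.

Lemma stab_action (n : nat) (G : {group {perm 'I_n}}) (y0 : 'I_n) : frobenius_perm_group G ->
  (exists2 g, g \in G & (g != 1) && (g y0 == y0)) ->
  Frobenius_action G 'C_G[y0 | 'P] [set: 'I_n] 'P.
Proof.
case=> transG fix1 _ [g0 Gg0 /andP[ng0 fg0]].
split=> //.
- apply/subsetP=> a /setIP[Ga /astabP fa]; apply/set1gP/permP=> x.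
  by rewrite perm1 -[a x]apermE fa.
- by move=> a /setD1P[na Ga]; rewrite fixE; apply: fix1.
- by apply/trivgPn; exists g0 => //; apply/stabP; split=> //; apply/eqP.
by exists y0.
Qed.

Lemma alg (gT : finGroupType) (u v w1 w2 : gT) :
  u * v^-1 = ((u*w1)*(v*w2)^-1) * ((w1 * w2^-1)^-1 ^ v^-1).
Proof.
rewrite /conjg !invMg !invgK !mulgA.
rewrite -(mulgA _ v^-1 v) mulVg mulg1 -(mulgA _ w2^-1 w2) mulVg mulg1.
by rewrite -(mulgA _ w1 w1^-1) mulgV mulg1.
Qed.


Theorem theorem12 (n : nat) (G H : {group {perm 'I_n}}) :
  frobenius_perm_group G -> frobenius_complement G H ->
  EKR G /\ (strict_EKR G <-> #|H| = 2).
Proof.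
move=> frobP complH.
have [transG fix1 [g0 Gg0 /andP[ng0 /existsP[y0 fy0]]]] := frobP.
have ex0 : exists2 g, g \in G & (g != 1) && (g y0 == y0).
  by exists g0 => //; rewrite ng0.
have actS := stab_action frobP ex0.
set S := 'C_G[y0 | 'P]%G.
have frobS : [Frobenius G with complement S] by apply/Frobenius_actionP; exact: (hasFrobeniusAction actS).
have [K' frobK'] := Frobenius_kernel_exists frobS.
have [K frobK] := Frobenius_kernel_exists (compl_frob complH).
have [defG' ntK' ntS ltK' ltS] := Frobenius_context frobK'.
have [nsK'G sSG _ nK'S tiK'S] := sdprod_context defG'.
have [sK'G nK'G] := andP nsK'G.
have kdef := Frobenius_action_kernel_def defG' actS.
have derange : forall g, g \in K' -> g != 1 -> forall x, g x != x.
  move=> g; rewrite kdef !inE => /orP[/eqP->|/andP[Gg /eqP F0]]; first by rewrite eqxx.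
  move=> _ x; apply/negP => gx.
  have : x \in 'Fix_([set: 'I_n] | 'P)[g] by rewrite fixE inE gx.
  by rewrite F0 inE.
have fixes : forall g, g \in G -> g \notin K' -> exists x, g x == x.
  move=> g Gg; rewrite kdef !inE Gg /= negb_or => /andP[_ /set0Pn[x]].
  by rewrite fixE inE; exists x.
have interK : forall p q, p \in G -> q \in G -> (p * q^-1 \in K' -> p = q) ->
    perm_intersect p q.
  move=> p q Gp Gq h; apply/existsP.
  have [/h -> | nK] := boolP (p * q^-1 \in K'); first by exists y0; rewrite mulgV perm1.
  exact: fixes (groupM Gp (groupVr Gq)) nK.
have interK_conv : forall p q, perm_intersect p q -> p * q^-1 \in K' -> p = q.
  move=> p q /existsP[x fx] Kpq.
  have [e|ne] := eqVneq (p * q^-1) 1; first by rewrite -(mulgKV q p) e mul1g.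
  by rewrite (negbTE (derange _ Kpq ne x)) in fx.
have idx : #|G : K'| = #|S|.
  apply/eqP; rewrite -(eqn_pmul2l (cardG_gt0 K')) (Lagrange sK'G).
  by rewrite (sdprod_card defG').
have stabsize : forall x, #|point_stab G x| = #|S|.
  move=> x; have [a Ga ->] := atransP2 transG (in_setT y0) (in_setT x).
  by rewrite /point_stab astab1_act -{1}(conjGid Ga) -conjIg cardJg.
have maxE : max_stab_size G = #|S|.
  apply/eqP; rewrite eqn_leq; apply/andP; split.
    by apply/bigmax_leqP => x _; rewrite stabsize.
  rewrite -(stabsize y0); exact: (@leq_bigmax _ (fun x : 'I_n => #|point_stab G x|) y0).
have ekr : EKR G.
  move=> T sTG iT; rewrite maxE.
  have inj : {in T &, injective (fun p => K' :* p)}.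
    move=> p q Tp Tq e; apply: (interK_conv _ _ (iT p q Tp Tq)).
    by rewrite -mem_rcoset -e rcoset_refl.
  rewrite -(card_in_imset inj) -idx; apply: subset_leq_card.
  apply/subsetP=> _ /imsetP[p Tp ->]; rewrite -rcosetE; apply: imset_f.
  exact: (subsetP sTG).
split=> //.
suff eqv : strict_EKR G <-> #|S| = 2.
  by split=> [/eqv/(frob_compl2 frobK frobK')|/(frob_compl2 frobK' frobK)/eqv].
split=> [[_ str] | s2]; last first.
  split=> // T sTG iT; rewrite maxE s2 => /eqP/cards2P[a [b [ab defT]]].
  have Ta : a \in T by rewrite defT !inE eqxx.
  have Tb : b \in T by rewrite defT !inE eqxx orbT.
  have Ga := subsetP sTG a Ta; have Gb := subsetP sTG b Tb.
  have /existsP[x fx] := iT b a Tb Ta.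
  exists x; exists a => //.
  have Cba : b * a^-1 \in point_stab G x.
    by apply/stabP; split; [rewrite groupM ?groupV | apply/eqP].
  have C1 : 1 \in point_stab G x by apply/stabP; split; rewrite ?group1 ?perm1.
  apply/eqP; rewrite eqEcard card_rcoset stabsize s2 defT cards2 ab leqnn andbT.
  apply/subsetP => z; rewrite !inE => /orP[]/eqP->; rewrite mem_rcoset ?mulgV //.
have ge2 : 1 < #|S| by rewrite cardG_gt1.
apply/eqP; rewrite eqn_leq ge2 andbT leqNgt; apply/negP => gt2.
have [h0 Sh0 nh0] := trivgPn _ ntS.
have : 0 < #|S :\ h0 :\ 1|.
  have := cardsD1 h0 S; rewrite Sh0 /= => e1.
  have := cardsD1 1 (S :\ h0); rewrite in_setD1 eq_sym nh0 group1 /= => e2.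
  by rewrite e1 e2 !add1n !ltnS in gt2.
case/card_gt0P => h1; rewrite !in_setD1 => /and3P[nh11 nh10 Sh1].
have [k K'k nk] := trivgPn _ ntK'.
have key : forall u v w1 w2, u \in S -> v \in S -> w1 \in K' -> w2 \in K' ->
    (u * w1) * (v * w2)^-1 \in K' -> u = v.
  move=> u v w1 w2 Su Sv Kw1 Kw2 Kp.
  have : u * v^-1 \in K' :&: S.
    apply/setIP; split; last by rewrite groupM ?groupV.
    rewrite (alg u v w1 w2) groupM //.
    rewrite memJ_norm ?groupV ?groupM ?groupV //; apply: (subsetP nK'S); rewrite ?groupV //.
  by rewrite tiK'S => /set1gP e; rewrite -(mulgKV v u) e mul1g.
pose T := h0 * k |: (S :\ h0).
have Gh0k : h0 * k \in G by rewrite groupM ?(subsetP sSG h0 Sh0) ?(subsetP sK'G k K'k).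
have nSh0k : h0 * k \notin S.
  apply/negP => Sh0k; have : k \in K' :&: S.
    by rewrite inE K'k -(mulKg h0 k) groupM ?groupV.
  by rewrite tiK'S => /set1gP; apply/eqP.
have sTG : T \subset G.
  apply/subsetP=> z; rewrite in_setU1 in_setD1 => /orP[/eqP->//|/andP[_ Sz]].
  exact: (subsetP sSG).
have Tcase : forall z, z \in T -> (z = h0 * k) \/ (z \in S /\ z != h0).
  move=> z; rewrite in_setU1 in_setD1 => /orP[/eqP->|/andP[nz Sz]]; [by left | by right].
have iT : intersecting T.
  move=> p q Tp Tq; apply: interK; rewrite ?(subsetP sTG) // => Kpq.
  case: (Tcase p Tp) => [ep|[Sp np]]; case: (Tcase q Tq) => [eq|[Sq nq]].
  - by rewrite ep eq.
  - have := key h0 q k 1 Sh0 Sq K'k (group1 _); rewrite mulg1 -ep => /(_ Kpq) e.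
    by rewrite e eqxx in nq.
  - have := key p h0 1 k Sp Sh0 (group1 _) K'k; rewrite mulg1 -eq => /(_ Kpq) e.
    by rewrite e eqxx in np.
  - by have := key p q 1 1 Sp Sq (group1 _) (group1 _); rewrite !mulg1; apply.
have cT : #|T| = max_stab_size G.
  rewrite maxE cardsU1 in_setD1 negb_and nSh0k orbT (cardsD1 h0 S) Sh0.
  by [].
have [x [g Gg defT]] := str T sTG iT cT.
have T1 : 1 \in T by rewrite in_setU1 in_setD1 group1 andbT (eq_sym 1 h0) nh0 orbT.
have Th1 : h1 \in T by rewrite in_setU1 in_setD1 nh10 Sh1 orbT.
have Th0k : h0 * k \in T by rewrite in_setU1 in_setD1 eqxx.
have Cg : g^-1 \in point_stab G x by move: T1; rewrite defT mem_rcoset mul1g.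
have Ch1 : h1 \in point_stab G x.
  move: Th1; rewrite defT mem_rcoset => C.
  by rewrite -(mulgK g^-1 h1) invgK /point_stab groupM // -groupV.
have xy0 : x = y0.
  have /stabP[Gh1 h1x] := Ch1.
  have : h1 \in point_stab G y0 := Sh1.
  case/stabP=> _ h1y.
  by apply: (card_le1_eqP (fix1 h1 Gh1 nh11)); rewrite inE; apply/eqP.
move: Th0k; rewrite defT mem_rcoset xy0 => C; rewrite xy0 in Cg.
have : h0 * k \in point_stab G y0.
  by rewrite -(mulgK g^-1 (h0 * k)) invgK /point_stab groupM // -groupV.
by move=> Sh0k; rewrite Sh0k in nSh0k.
Qed.
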